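(* Let $(V_n)_{n\in\mathbb{N}}$ be a quasi non-conforming approximation of $V$ in $X$. Then: (i) if $v_n\in V_{m_n}$ with $m_n\to\infty$ and $v_n\rightharpoonup v$ weakly in $X$, then $v\in V$. (ii) If $v_n\in V_{m_n}$ with $m_n\to\infty$, $\sup_n\|v_n\|_X<\infty$, and $v\in V$, then $v_n\rightharpoonup v$ weakly in $X$ if and only if $P_Hjv_n\rightharpoonup jv$ weakly in $H$. (iii) For every $h\in H$ there are $v_n\in V_{m_n}$ with $m_n\to\infty$ such that $jv_n\to h$ in $Y$.
   Context: An evolution triple $(V,H,j)$: $V$ reflexive Banach, $H$ Hilbert, $j:V\to H$ linear injective bounded with dense range. Let $(V,H,j)$, $(X,Y,j)$ be evolution triples with $V\subseteq X$, $\|\cdot\|_V=\|\cdot\|_X$ on $V$, $H\subseteq Y$, $(\cdot,\cdot)_H=(\cdot,\cdot)_Y$ on $H$, the embedding $X\to Y$ restricting to that of $V\to H$; $P_H:Y\to H$ is the orthogonal projection. $I=(0,T)$, $T<\infty$, $1<p<\infty$. A sequence of closed subspaces $(V_n)$ of $X$ is a quasi non-conforming approximation of $V$ in $X$ if (QNC.1) there is a dense $D\subseteq V$ such that each $v\in D$ is the $X$-limit of some $v_n\in V_n$, and (QNC.2) whenever $\boldsymbol{x}_n\in L^p(I,V_{m_n})$ with $m_n\to\infty$ and $\boldsymbol{x}_n\rightharpoonup\boldsymbol{x}$ in $L^p(I,X)$, then $\boldsymbol{x}\in L^p(I,V)$. *)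

(* Defs.v *)
From HB Require Import structures.
From mathcomp Require Import all_boot all_order all_algebra.
From mathcomp Require Import all_classical all_reals all_analysis.
Set Implicit Arguments. Unset Strict Implicit. Unset Printing Implicit Defensive.
Import Order.TTheory GRing.Theory Num.Theory.
Import numFieldNormedType.Exports.
Local Open Scope classical_set_scope.
Local Open Scope ring_scope.

Section Defs.
Variable R : realType.

Definition lin_subspace (E : normedModType R) (S : set E) : Prop :=
  S 0 /\ forall (a : R) (x y : E), S x -> S y -> S (a *: x + y).

Definition closed_subspace (E : normedModType R) (S : set E) : Prop :=
  lin_subspace S /\ closed S.

(* f : E -> R restricted to S is an element of the dual S^* of the normed
   space (S, ||.||_E): linear on S and bounded on S. *)
Definition dual_elt_on (E : normedModType R) (S : set E) (f : E -> R) : Prop :=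
  (forall (a : R) (x y : E), S x -> S y -> f (a *: x + y) = a * f x + f y) /\
  exists C : R, forall x, S x -> `|f x| <= C * `|x|.

Definition weak_cvg_in (E : normedModType R) (S : set E) (u : nat -> E) (x : E)
  : Prop :=
  S x /\ forall f : E -> R, dual_elt_on S f -> (fun n => f (u n)) @ \oo --> f x.

Definition weak_cvg (E : normedModType R) (u : nat -> E) (x : E) : Prop :=
  weak_cvg_in setT u x.

Definition dual_set (E : normedModType R) : set (E -> R) := dual_elt_on setT.

(* Reflexivity: every bounded linear functional Phi on E^* (bounded w.r.t.
   the operator norm ||f|| = inf{M >= 0 | forall x, |f x| <= M ||x||})
   is evaluation at some x in E. *)
Definition reflexive_space (E : normedModType R) : Prop :=
  forall Phi : (E -> R) -> R,
    (forall (a : R) f g, dual_set f -> dual_set g ->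
        Phi (fun x => a * f x + g x) = a * Phi f + Phi g) ->
    (exists C : R, forall f M, dual_set f -> 0 <= M ->
        (forall x, `|f x| <= M * `|x|) -> `|Phi f| <= C * M) ->
    exists x : E, forall f, dual_set f -> Phi f = f x.

Definition inner_product (Y : normedModType R) (ip : Y -> Y -> R) : Prop :=
  (forall x y, ip x y = ip y x) /\
  (forall (a : R) x y z, ip (a *: x + y) z = a * ip x z + ip y z) /\
  (forall x, ip x x = `|x| ^+ 2).

Definition orth_proj (Y : normedModType R) (ip : Y -> Y -> R) (H : set Y)
  (P : Y -> Y) : Prop :=
  (forall y, H (P y)) /\ (forall y h, H h -> ip (y - P y) h = 0).

Definition bounded_linear_inj (X Y : normedModType R) (j : X -> Y) : Prop :=
  (forall (a : R) x y, j (a *: x + y) = a *: j x + j y) /\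
  injective j /\ exists C : R, forall x, `|j x| <= C * `|x|.

Definition tends_to_infty (m : nat -> nat) : Prop :=
  forall N : nat, exists n0 : nat, forall n, (n0 <= n)%N -> (N <= m n)%N.

Definition Iset (T : R) : set R := `]0, T[.

Definition simple_fun (X : normedModType R) (s : R -> X) : Prop :=
  exists (k : nat) (A : 'I_k -> set R) (c : 'I_k -> X),
    (forall i, measurable (A i)) /\
    forall t, s t = \sum_(i < k) (\1_(A i) t : R) *: c i.

Definition strongly_measurable (X : normedModType R) (T : R) (f : R -> X)
  : Prop :=
  exists s : nat -> R -> X, (forall k, simple_fun (s k)) /\
    {ae (@lebesgue_measure R), forall t, Iset T t ->
        (fun k => s k t) @ \oo --> f t}.

Definition Lp_fun (X : normedModType R) (p T : R) (f : R -> X) : Prop :=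
  strongly_measurable T f /\
  (\int[(@lebesgue_measure R)]_(t in Iset T) ((`|f t| `^ p)%:E) < +oo)%E.

Definition Lp_norm (X : normedModType R) (p T : R) (f : R -> X) : R :=
  (fine (\int[(@lebesgue_measure R)]_(t in Iset T) ((`|f t| `^ p)%:E)))
    `^ (p^-1).

Definition Lp_fun_in (X : normedModType R) (p T : R) (W : set X) (f : R -> X)
  : Prop :=
  Lp_fun p T f /\ {ae (@lebesgue_measure R), forall t, Iset T t -> W (f t)}.

Definition Lp_dual_elt (X : normedModType R) (p T : R) (phi : (R -> X) -> R)
  : Prop :=
  (forall (a : R) f g, Lp_fun p T f -> Lp_fun p T g ->
      phi (fun t => a *: f t + g t) = a * phi f + phi g) /\
  exists C : R, forall f, Lp_fun p T f -> `|phi f| <= C * Lp_norm p T f.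

Definition Lp_weak_cvg (X : normedModType R) (p T : R) (u : nat -> R -> X)
  (x : R -> X) : Prop :=
  Lp_fun p T x /\ (forall n, Lp_fun p T (u n)) /\
  forall phi, Lp_dual_elt p T phi -> (fun n => phi (u n)) @ \oo --> phi x.

Definition quasi_nonconforming (X : normedModType R) (p T : R)
  (V : set X) (Vn : nat -> set X) : Prop :=
  (forall n, closed_subspace (Vn n)) /\
  (exists D : set X, D `<=` V /\ V `<=` closure D /\
     forall v, D v -> exists vn : nat -> X,
        (forall n, Vn n (vn n)) /\ vn @ \oo --> v) /\
  (forall (m : nat -> nat) (x : nat -> R -> X) (x0 : R -> X),
      tends_to_infty m ->
      (forall n, Lp_fun_in p T (Vn (m n)) (x n)) ->
      Lp_weak_cvg p T x x0 ->
      Lp_fun_in p T V x0).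

End Defs.

(* Main.v *)
Require Import Defs.
From HB Require Import structures.
From mathcomp Require Import all_boot all_order all_algebra.
From mathcomp Require Import all_classical all_reals all_analysis.
From mathcomp Require Import ring lra.
Import Order.TTheory GRing.Theory Num.Theory.
Import numFieldNormedType.Exports.
Local Open Scope classical_set_scope.
Local Open Scope ring_scope.
Set Implicit Arguments. Unset Strict Implicit. Unset Printing Implicit Defensive.

Section IP.
Variables (R : realType) (Y : normedModType R) (ip : Y -> Y -> R).
Hypothesis hip : inner_product ip.

Lemma ip_sym x y : ip x y = ip y x.
Proof. by case: hip. Qed.

Lemma ip_lin a x y z : ip (a *: x + y) z = a * ip x z + ip y z.
Proof. by case: hip => _ []. Qed.

Lemma ip_self x : ip x x = `|x| ^+ 2.
Proof. by case: hip => _ []. Qed.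

Lemma ip0l z : ip 0 z = 0.
Proof.
have := ip_lin 1 0 0 z; rewrite scaler0 addr0 mul1r => h; lra.
Qed.

Lemma ipDl x y z : ip (x + y) z = ip x z + ip y z.
Proof. by rewrite -[x in LHS]scale1r ip_lin mul1r. Qed.

Lemma ipZl a x z : ip (a *: x) z = a * ip x z.
Proof. by rewrite -[a *: x]addr0 ip_lin ip0l addr0. Qed.

Lemma ipNl x z : ip (- x) z = - ip x z.
Proof. by rewrite -scaleN1r ipZl mulN1r. Qed.

Lemma ipBl x y z : ip (x - y) z = ip x z - ip y z.
Proof. by rewrite ipDl ipNl. Qed.

Lemma ip0r z : ip z 0 = 0.
Proof. by rewrite ip_sym ip0l. Qed.

Lemma ipDr x y z : ip z (x + y) = ip z x + ip z y.
Proof. by rewrite !(ip_sym z) ipDl. Qed.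

Lemma ipZr a x z : ip z (a *: x) = a * ip z x.
Proof. by rewrite !(ip_sym z) ipZl. Qed.

Lemma ipNr x z : ip z (- x) = - ip z x.
Proof. by rewrite !(ip_sym z) ipNl. Qed.

Lemma ipBr x y z : ip z (x - y) = ip z x - ip z y.
Proof. by rewrite !(ip_sym z) ipBl. Qed.

Lemma ip_eq0 x : ip x x = 0 -> x = 0.
Proof. by rewrite ip_self => /eqP; rewrite sqrf_eq0 normr_eq0 => /eqP. Qed.

Lemma normD2 x y : `|x + y| ^+ 2 = `|x| ^+ 2 + 2 * ip x y + `|y| ^+ 2.
Proof.
rewrite -!ip_self ipDl !ipDr (ip_sym y x); lra.
Qed.

Lemma normB2 x y : `|x - y| ^+ 2 = `|x| ^+ 2 - 2 * ip x y + `|y| ^+ 2.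
Proof. by rewrite normD2 ipNr normrN; lra. Qed.

Lemma cauchy_schwarz x y : `|ip x y| <= `|x| * `|y|.
Proof.
have key t : 0 <= `|x| ^+ 2 - 2 * t * ip x y + t ^+ 2 * `|y| ^+ 2.
  have := normB2 x (t *: y); rewrite ipZr normrZ exprMn real_normK ?num_real //.
  move=> h; have := sqr_ge0 `|x - t *: y|; rewrite h; nra.
set c := ip x y.
have [y0|yn0] := eqVneq `|y| 0.
  have c0 : c = 0.
    apply/eqP; apply: contraT => cn0.
    have := key ((`|x| ^+ 2 + 1) / (2 * c)); rewrite y0 expr0n /= mulr0 addr0.
    have -> : 2 * ((`|x| ^+ 2 + 1) / (2 * c)) * c = `|x| ^+ 2 + 1.
      by field; rewrite cn0.
    lra.
  by rewrite c0 normr0 mulr_ge0.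
have y2 : 0 < `|y| ^+ 2 by rewrite exprn_gt0 // lt_def yn0 normr_ge0.
have := key (c / `|y| ^+ 2).
have yn : `|y| ^+ 2 != 0 by rewrite gt_eqF.
have -> : 2 * (c / `|y| ^+ 2) * c = 2 * (c ^+ 2 / `|y| ^+ 2).
  by rewrite expr2 mulrA mulrAC -!mulrA.
have -> : (c / `|y| ^+ 2) ^+ 2 * `|y| ^+ 2 = c ^+ 2 / `|y| ^+ 2.
  by field.
move=> h.
have : c ^+ 2 / `|y| ^+ 2 <= `|x| ^+ 2 by lra.
rewrite ler_pdivrMr // => h2.
by rewrite -ler_sqr ?nnegrE ?mulr_ge0 // exprMn real_normK ?num_real.
Qed.

End IP.

Lemma natSinv_small (R : realType) (e : R) : 0 < e ->
  exists N : nat, forall n, (N <= n)%N -> n.+1%:R^-1 < e.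
Proof.
move=> e0; have [N _ HN] := near_infty_natSinv_lt (PosNum e0).
by exists N => n hn; apply: HN.
Qed.

Lemma natSinv_le (R : realType) (N n : nat) : (N <= n)%N ->
  n.+1%:R^-1 <= N.+1%:R^-1 :> R.
Proof.
by move=> h; rewrite lef_pV2 ?posrE ?ltr0n // ler_nat ltnS.
Qed.

Lemma para_aux (R : realType) (p q c r u v : R) : p ^+ 2 < r + u ->
  q ^+ 2 < r + v -> 4 * r <= p ^+ 2 + 2 * c + q ^+ 2 ->
  p ^+ 2 - 2 * c + q ^+ 2 < 2 * u + 2 * v.
Proof. lra. Qed.

Lemma cauchy_aux (R : realType) (x e u v : R) : 0 <= x -> 0 < e ->
  x ^+ 2 < 2 * u + 2 * v -> v <= u -> u < e ^+ 2 / 4 -> x < e.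
Proof. move=> x0 e0 h1 h2 h3; nra. Qed.

Lemma le_aux (R : realType) (a d u e : R) : a < d + u -> u < e -> a <= d + e.
Proof. lra. Qed.

Lemma var_aux2 (R : realType) (a d t c S X : R) : a <= d ->
  d <= X -> X = a - 2 * (t * c) + t ^+ 2 * S -> 0 <= - 2 * t * c + t ^+ 2 * S.
Proof. lra. Qed.

Lemma var_aux (R : realType) (S c : R) : 0 <= S ->
  (forall t, 0 <= - 2 * t * c + t ^+ 2 * S) -> c = 0.
Proof.
move=> S0 h; have k0 : 0 < (S + 1) ^+ 2 by rewrite exprn_gt0 //; lra.
have := h (c / (S + 1)).
have -> : - 2 * (c / (S + 1)) * c + (c / (S + 1)) ^+ 2 * S =
  - (c ^+ 2 * (S + 2)) / (S + 1) ^+ 2.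
  by field; rewrite gt_eqF //; lra.
rewrite pmulr_lge0 ?invr_gt0 // => h2.
have : c ^+ 2 <= 0 by nra.
by move=> h3; apply/eqP; rewrite -sqrf_eq0 eq_le h3 sqr_ge0.
Qed.

Section Proj.
Variables (R : realType) (Y : completeNormedModType R) (ip : Y -> Y -> R).
Hypothesis hip : inner_product ip.
Variable G : set Y.
Hypothesis hG : closed_subspace G.

Lemma G0 : G 0. Proof. by case: hG => -[]. Qed.
Lemma GZD a x y : G x -> G y -> G (a *: x + y).
Proof. by case: hG => -[_ h] _; apply: h. Qed.
Lemma GD x y : G x -> G y -> G (x + y).
Proof. by move=> gx gy; rewrite -[x]scale1r; apply: GZD. Qed.
Lemma GZ a x : G x -> G (a *: x).
Proof. by move=> gx; rewrite -[_ *: _]addr0; apply: GZD => //; apply: G0. Qed.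
Lemma GN x : G x -> G (- x).
Proof. by move=> gx; rewrite -scaleN1r; apply: GZ. Qed.
Lemma GB x y : G x -> G y -> G (x - y).
Proof. by move=> gx gy; apply: GD => //; apply: GN. Qed.

Lemma proj_ex y : exists2 g, G g & forall s, G s -> ip (y - g) s = 0.
Proof.
set E := [set `|y - s| ^+ 2 | s in G].
have E0 : E (`|y| ^+ 2) by exists 0; rewrite ?subr0 //; apply: G0.
have lbE : has_lbound E by exists 0 => _ [s _ <-]; exact: sqr_ge0.
have hE : has_inf E by split => //; exists (`|y| ^+ 2).
set d := inf E.
have dle s : G s -> d <= `|y - s| ^+ 2 by move=> Gs; apply: ge_inf => //; exists s.
have ex n : exists s, G s /\ `|y - s| ^+ 2 < d + n.+1%:R^-1.
  have hp : 0 < n.+1%:R^-1 :> R by rewrite invr_gt0 ltr0n.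
  have [e [s Gs <-] hs] := inf_adherent hp hE.
  by exists s.
have [sq hsq] := choice ex.
have para n m : `|sq n - sq m| ^+ 2 < 2 * n.+1%:R^-1 + 2 * m.+1%:R^-1.
  have [Gn hn] := hsq n; have [Gm hm] := hsq m.
  set a := y - sq n in hn *; set b := y - sq m in hm *.
  have hab : `|sq n - sq m| = `|a - b|.
    by rewrite /a /b opprD opprK addrACA subrr add0r addrC distrC.
  have hmid : y - 2^-1 *: (sq n + sq m) = 2^-1 *: (a + b).
    have -> : a + b = y *+ 2 - (sq n + sq m) by rewrite /a /b mulr2n addrACA opprD.
    by rewrite scalerBr -[y *+ 2]scaler_nat scalerA mulVf ?pnatr_eq0 // scale1r.
  have Gmid : G (2^-1 *: (sq n + sq m)) by apply: GZ; apply: GD.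
  have := dle _ Gmid; rewrite hmid.
  have -> : `|2^-1 *: (a + b)| ^+ 2 = 4^-1 * `|a + b| ^+ 2.
    rewrite normrZ exprMn ger0_norm ?invr_ge0 ?ler0n //; congr (_ * _).
    by field.
  rewrite hab (normB2 hip) (normD2 hip) => h.
  have h4 : 4 * d <= `|a| ^+ 2 + 2 * ip a b + `|b| ^+ 2.
    by rewrite -ler_pdivlMl ?ltr0n // mulrC.
  exact: para_aux hn hm h4.
have cs : cvg (sq @ \oo).
  apply: cauchy_cvg; apply: cauchy_exP => eps eps0.
  have e2 : 0 < eps ^+ 2 / 4 by rewrite divr_gt0 ?exprn_gt0.
  have [N HN] := natSinv_small e2.
  exists (sq N); exists N => // n /= hn.
  rewrite -ball_normE /=.
  apply: (cauchy_aux (normr_ge0 _) eps0).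
  exact: para.
  exact: natSinv_le hn.
  exact: HN.
set g := lim (sq @ \oo).
have Gg : G g.
  apply: (@closed_cvg _ _ _ _ sq G _ _ _ cs); first by case: hG.
  by apply: nearW => n; case: (hsq n).
exists g => //.
have hg2 : `|y - g| ^+ 2 <= d.
  apply/ler_addgt0Pr => e e0.
  have hnn : (fun n => `|y - sq n|) @ \oo --> `|y - g|.
    apply: cvg_norm; apply: cvgB => //; exact: cvg_cst.
  have hconv : (fun n => `|y - sq n| ^+ 2) @ \oo --> `|y - g| ^+ 2.
    under eq_fun do rewrite expr2.
    rewrite expr2. apply: cvgM; exact: hnn.
  apply: (cvgr_to_le hconv).
  have [N HN] := natSinv_small e0.
  exists N => // n /= hn'.
  exact: le_aux (hsq n).2 (HN n hn').
move=> s Gs.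
apply: (var_aux (sqr_ge0 `|s|)) => t.
have := dle (g + t *: s) (GD Gg (GZ t Gs)).
have -> : y - (g + t *: s) = (y - g) - t *: s by rewrite opprD addrA.
move=> h; have e := normB2 hip (y - g) (t *: s).
rewrite (ipZr hip) in e. rewrite (normrZ t s) in e. rewrite exprMn real_normK ?num_real // in e.
exact: var_aux2 hg2 h e.
Qed.


End Proj.

Definition U0_ex := ultraFilterLemma (@eventually_filter).
Definition U0 : set_system nat := projT1 (cid U0_ex).
Global Instance U0_ultra : UltraFilter U0 := (projT2 (cid U0_ex)).1.
Lemma U0_sub : (\oo : set_system nat) `<=` U0.
Proof. exact: (projT2 (cid U0_ex)).2. Qed.

Lemma U0_inf (A : set nat) : U0 A -> forall N, exists n, (N <= n)%N /\ A n.
Proof.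
move=> UA N; have UN : U0 [set n | (N <= n)%N] by apply: U0_sub; exists N.
by have [n [hn An]] := filter_ex (filterI UN UA); exists n.
Qed.

Section ULim.
Variable R : realType.
Implicit Types (u v : nat -> R).

Definition ulim u : R := lim (u @ U0).

Lemma ulim_cvg u B : (forall n, `|u n| <= B) -> u @ U0 --> ulim u.
Proof.
move=> hB; rewrite /ulim.
suff : exists p : R, u @ U0 --> p by move=> [p hp]; exact: (cvgP p hp).
have hF : (u @ U0) [set` `[-B, B]].
  apply: (@filterS _ U0 _ setT); last exact: filterT.
  by move=> n _ /=; rewrite in_itv /= -ler_norml.
have [p [_ cp]] := @segment_compact _ (-B) B (u @ U0) _ hF.
exists p; apply/cvgrPdist_lt => e e0.
case: (in_ultra_setVsetC [set n | `|p - u n| < e] U0_ultra) => // hC.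
exfalso.
have hA : (u @ U0) [set x | ~ (`|p - x| < e)] by [].
have hb : nbhs p (ball p e) by apply: nbhsx_ballx.
have [x [/= hx1 hx2]] := cp _ _ hA hb.
by apply: hx1; rewrite -ball_normE in hx2.
Qed.

Lemma ulim_lim u l : u @ \oo --> l -> ulim u = l.
Proof.
move=> h; apply: (cvg_lim (@norm_hausdorff _ _)) => A hA; apply: U0_sub; exact: h.
Qed.

Lemma ulim_lin (a : R) u v Bu Bv : (forall n, `|u n| <= Bu) -> (forall n, `|v n| <= Bv) ->
  ulim (fun n => a * u n + v n) = a * ulim u + ulim v.
Proof.
move=> hu hv; apply: (cvg_lim (@norm_hausdorff _ _)); apply: cvgD; last exact: ulim_cvg hv.
apply: cvgM; [exact: cvg_cst | exact: ulim_cvg hu].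
Qed.

Lemma ulim_bound u B : (forall n, `|u n| <= B) -> `|ulim u| <= B.
Proof.
move=> hu.
have h : (fun x => `|u x|) @ U0 --> `|ulim u| by apply: cvg_norm; exact: ulim_cvg hu.
apply: (cvgr_to_le h); exact: nearW.
Qed.

Lemma ulim_near u B e : (forall n, `|u n| <= B) -> 0 < e ->
  U0 [set n | `|ulim u - u n| < e].
Proof.
move=> hu e0; have h := ulim_cvg hu.
by move/cvgrPdist_lt : h => /(_ e e0).
Qed.

End ULim.

Lemma incr_ge (s : nat -> nat) : (forall n, (s n < s n.+1)%N) -> forall n, (n <= s n)%N.
Proof. by move=> hs; elim=> [|n IH] //; apply: leq_ltn_trans IH (hs n). Qed.

Lemma incr_mono (s : nat -> nat) : (forall n, (s n < s n.+1)%N) ->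
  forall n m, (n <= m)%N -> (s n <= s m)%N.
Proof.
move=> hs n m /subnK <-; elim: (m - n)%N => [|k IH] //=.
by rewrite addSn; apply: leq_trans IH (ltnW (hs _)).
Qed.

Lemma cvg_sub (R : realType) (u : nat -> R) l (s : nat -> nat) :
  (forall n, (s n < s n.+1)%N) -> u @ \oo --> (l : R) -> (fun n => u (s n)) @ \oo --> l.
Proof.
move=> hs /cvgrPdist_lt h; apply/cvgrPdist_lt => e e0.
have [N _ HN] := h e e0; exists N => // n /= hn.
by apply: HN; apply: leq_trans hn (incr_ge hs n).
Qed.

Lemma tends_sub (m s : nat -> nat) : (forall n, (s n < s n.+1)%N) ->
  tends_to_infty m -> tends_to_infty (fun n => m (s n)).
Proof.
move=> hs hm N; have [n0 H] := hm N; exists n0 => n hn.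
by apply: H; apply: leq_trans hn (incr_ge hs n).
Qed.

Section Dual.
Variables (R : realType) (X : normedModType R).

Lemma dual_lin (f : X -> R) a x y : dual_set f -> f (a *: x + y) = a * f x + f y.
Proof. by case=> h _; apply: h. Qed.

Lemma dual_bnd (f : X -> R) : dual_set f -> exists C, 0 <= C /\ forall x, `|f x| <= C * `|x|.
Proof.
case=> _ [C hC]; exists `|C|; split => // x.
apply: le_trans (hC x I) _; apply: ler_wpM2r => //; exact: ler_norm.
Qed.

Lemma dual_bounded (f : X -> R) (x : nat -> X) B : dual_set f ->
  (forall n, `|x n| <= B) -> exists C, forall n, `|f (x n)| <= C.
Proof.
move=> /dual_bnd [C [C0 hC]] hB; exists (C * B) => n.
by apply: le_trans (hC _) _; apply: ler_wpM2l.
Qed.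

End Dual.

Section Refl.
Variables (R : realType) (X : normedModType R).
Hypothesis hXrefl : reflexive_space X.

Lemma weak_limit (x : nat -> X) B : (forall n, `|x n| <= B) ->
  exists w, forall f, dual_set f -> ulim (fun n => f (x n)) = f w.
Proof.
move=> hB; apply: (@hXrefl (fun f : X -> R => ulim (fun n => f (x n)))).
  move=> a f g hf hg.
  have [Cf hCf] := dual_bounded hf hB; have [Cg hCg] := dual_bounded hg hB.
  exact: ulim_lin hCf hCg.
exists B => f M hf M0 hM; apply: ulim_bound => n.
apply: le_trans (hM _) _; rewrite [B * M]mulrC; exact: ler_wpM2l.
Qed.

Variables (Y : normedModType R) (ip : Y -> Y -> R) (j : X -> Y).
Hypothesis hip : inner_product ip.
Hypothesis hj : bounded_linear_inj j.

Lemma j_lin a x y : j (a *: x + y) = a *: j x + j y.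
Proof. by case: hj. Qed.

Lemma j_bnd : exists C, 0 <= C /\ forall x, `|j x| <= C * `|x|.
Proof.
case: hj => _ [_ [C hC]]; exists `|C|; split => // x.
apply: le_trans (hC x) _; apply: ler_wpM2r => //; exact: ler_norm.
Qed.

Lemma ipj_dual y : dual_set (fun x => ip (j x) y).
Proof.
split; first by move=> a x1 x2 _ _; rewrite j_lin (ip_lin hip).
have [C [C0 hC]] := j_bnd; exists (C * `|y|) => x _.
apply: le_trans (cauchy_schwarz hip _ _) _.
rewrite mulrAC; apply: ler_wpM2r => //; exact: hC.
Qed.

Lemma KL (x : nat -> X) B : (forall n, `|x n| <= B) ->
  (forall y, cvg ((fun n => ip (j (x n)) y) @ \oo)) -> exists w, weak_cvg x w.
Proof.
move=> hB hc.
have [w hw] := weak_limit hB.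
exists w; split => // f hf.
apply/cvgrPdist_lt => e e0; apply: contrapT => hne.
have hfreq : forall N, exists n, (N <= n)%N /\ ~ (`|f w - f (x n)| < e).
  move=> N; apply: contrapT => hN; apply: hne; exists N => // n /= hn.
  by apply: contrapT => h; apply: hN; exists n.
have [nx hnx] := choice hfreq.
pose tau := fix t n := if n is n'.+1 then nx (t n').+1 else nx 0%N.
have htau : forall n, ~ (`|f w - f (x (tau n))| < e) by case => [|n]; apply: (hnx _).2.
have tinc : forall n, (tau n < tau n.+1)%N by move=> n; exact: (hnx _).1.
have hB' : forall n, `|x (tau n)| <= B by move=> n; exact: hB.
have [w' hw'] := weak_limit hB'.
have key : forall y, ip (j w') y = ip (j w) y.
  move=> y; rewrite -(hw' _ (ipj_dual y)) -(hw _ (ipj_dual y)) /=.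
  have hl := hc y.
  by rewrite (ulim_lim hl) (ulim_lim (cvg_sub tinc hl)).
have ejw : j w' = j w.
  apply/eqP; rewrite -subr_eq0; apply/eqP; apply: (ip_eq0 hip).
  by rewrite (ipBl hip) key subrr.
have ww : w' = w by case: hj => _ [hinj _]; exact: hinj.
have [C hC] := dual_bounded hf hB'.
have [n [_ hn]] := U0_inf (ulim_near hC e0) 0.
by apply: (htau n); rewrite (hw' _ hf) ww in hn.
Qed.

End Refl.

Lemma freq_sub (P : nat -> Prop) : ~ (\forall n \near \oo, P n) ->
  exists tau : nat -> nat, (forall n, (tau n < tau n.+1)%N) /\ forall n, ~ P (tau n).
Proof.
move=> hne.
have hfreq : forall N, exists n, (N <= n)%N /\ ~ P n.
  move=> N; apply: contrapT => hN; apply: hne; exists N => // n /= hn.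
  by apply: contrapT => h; apply: hN; exists n.
have [nx hnx] := choice hfreq.
pose tau := fix t n := if n is n'.+1 then nx (t n').+1 else nx 0%N.
exists tau; split; first by move=> n; exact: (hnx _).1.
by case => [|n]; apply: (hnx _).2.
Qed.

Lemma incr_comp (s t : nat -> nat) : (forall n, (s n < s n.+1)%N) ->
  (forall n, (t n < t n.+1)%N) -> forall n, (s (t n) < s (t n.+1))%N.
Proof.
move=> hs ht n; apply: leq_trans (hs _) _; apply: incr_mono => //; exact: ht.
Qed.

Lemma lim_uniq (R : realType) (u : nat -> R) (a b : R) : u @ \oo --> a -> u @ \oo --> b -> a = b.
Proof. by move=> ha hb; rewrite -(ulim_lim ha) (ulim_lim hb). Qed.

Lemma three_aux (R : realType) (a b c e : R) : a < e / 3 -> b < e / 3 -> c < e / 3 ->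
  a + b + c < e.
Proof. lra. Qed.

Section HS.
Variables (R : realType) (Y : completeNormedModType R) (ip : Y -> Y -> R).
Hypothesis hip : inner_product ip.

Lemma HS (y : nat -> Y) B : (forall n, `|y n| <= B) ->
  exists s : nat -> nat, (forall n, (s n < s n.+1)%N) /\
    forall z, cvg ((fun n => ip (y (s n)) z) @ \oo).
Proof.
move=> hB.
have B0 : 0 <= B by apply: le_trans (hB 0%N).
set B' := B + 1.
have B'0 : 0 < B' by rewrite /B'; lra.
have hbz z n : `|ip (y n) z| <= B' * `|z|.
  apply: le_trans (cauchy_schwarz hip _ _) _; apply: ler_wpM2r => //.
  by apply: le_trans (hB n) _; rewrite /B'; lra.
pose L k := ulim (fun n => ip (y n) (y k)).
have hA : forall eps, 0 < eps -> forall K,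
    U0 [set m | forall k, (k <= K)%N -> `|L k - ip (y m) (y k)| < eps].
  move=> eps e0; elim=> [|K IH].
    apply: filterS (ulim_near (hbz (y 0%N)) e0) => m hm k.
    by rewrite leqn0 => /eqP ->.
  apply: filterS (filterI IH (ulim_near (hbz (y K.+1)) e0)) => m [h1 h2] k.
  by rewrite leq_eqVlt ltnS => /orP [/eqP -> //|]; exact: h1.
have hnext : forall p : nat * nat, exists m, (p.2 < m)%N /\
    forall k, (k <= p.1)%N -> `|L k - ip (y m) (y k)| < p.1.+1%:R^-1.
  move=> [n N]; have hp : 0 < n.+1%:R^-1 :> R by rewrite invr_gt0 ltr0n.
  by have [m [hm Am]] := U0_inf (hA _ hp n) N.+1; exists m.
have [nx hnx] := choice hnext.
pose s := fix s n := if n is n'.+1 then nx (n, s n') else nx (0%N, 0%N).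
have hsA n : forall k, (k <= n)%N -> `|L k - ip (y (s n)) (y k)| < n.+1%:R^-1.
  by case: n => [|n] k hk; [exact: ((hnx (0%N, 0%N)).2 k hk) | exact: ((hnx (n.+1, s n)).2 k hk)].
have sinc : forall n, (s n < s n.+1)%N by move=> n; exact: (hnx (n.+1, s n)).1.
exists s; split => //.
have hyk : forall k, (fun n => ip (y (s n)) (y k)) @ \oo --> L k.
  move=> k; apply/cvgrPdist_lt => e e0.
  have [N HN] := natSinv_small e0.
  exists (maxn N k) => // n /= hn.
  apply: lt_trans (hsA n k _) _; first exact: leq_trans (leq_maxr N k) hn.
  exact: HN (leq_trans (leq_maxl N k) hn).
pose ell z := ulim (fun n => ip (y (s n)) z).
pose G := [set z | exists l : R, (fun n => ip (y (s n)) z) @ \oo --> l].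
have hipr a z1 z2 n : ip (y (s n)) (a *: z1 + z2) = a * ip (y (s n)) z1 + ip (y (s n)) z2.
  by rewrite (ip_sym hip) (ip_lin hip) !(ip_sym hip _ (y (s n))).
have hG : closed_subspace G.
  split; first split.
  - exists 0; under eq_fun do rewrite (ip0r hip); exact: cvg_cst.
  - move=> a z1 z2 [l1 h1] [l2 h2]; exists (a * l1 + l2).
    under eq_fun do rewrite hipr.
    apply: cvgD => //; apply: cvgM => //; exact: cvg_cst.
  move=> z hz; exists (ell z); apply/cvgrPdist_lt => e e0.
  have e30 : 0 < e / 3 / B' by rewrite !divr_gt0.
  have [z' [[l' hl'] hzz']] := hz _ (nbhsx_ballx z _ e30).
  rewrite -ball_normE /= in hzz'.
  have ell' : ell z' = l' by apply: ulim_lim.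
  have e3 : 0 < e / 3 by rewrite divr_gt0.
  have [N _ HN] : \forall n \near \oo, `|l' - ip (y (s n)) z'| < e / 3.
    by move/cvgrPdist_lt : hl' => /(_ _ e3).
  exists N => // n /= hn.
  have d1 : `|ell z - ell z'| < e / 3.
    have -> : ell z - ell z' = ulim (fun n => -1 * ip (y (s n)) z' + ip (y (s n)) z).
      by rewrite (ulim_lin _ (fun m => hbz z' (s m)) (fun m => hbz z (s m))) mulN1r addrC.
    apply: le_lt_trans (ulim_bound (B := B' * `|z - z'|) _) _.
      move=> m; rewrite mulN1r addrC -(ip_sym hip z') -(ip_sym hip z) -(ipBl hip) (ip_sym hip).
      exact: hbz.
    by rewrite -ltr_pdivlMl // mulrC.
  have d3 : `|ip (y (s n)) z' - ip (y (s n)) z| < e / 3.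
    rewrite -(ipBr hip); apply: le_lt_trans (hbz _ _) _.
    by rewrite distrC -ltr_pdivlMl // mulrC.
  have := HN n hn; rewrite -ell' => d2.
  have -> : ell z - ip (y (s n)) z = (ell z - ell z') +
      ((ell z' - ip (y (s n)) z') + (ip (y (s n)) z' - ip (y (s n)) z)).
    by rewrite !addrA !subrK.
  apply: le_lt_trans (ler_normD _ _) _.
  apply: le_lt_trans (lerD (lexx _) (ler_normD _ _)) _.
  rewrite addrA; exact: three_aux d1 d2 d3.
have Gy k : G (y k) by exists (L k); exact: hyk.
have GY z : G z.
  have [g Gg hg] := proj_ex hip hG z.
  have Gt : G (z - g).
    exists 0; apply: cvg_near_cst; apply: nearW => n.
    by rewrite (ip_sym hip) hg.
  by have := GD hG Gg Gt; rewrite addrC subrK.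
by move=> z; have [l hl] := GY z; exact: (cvgP l hl).
Qed.

End HS.

Section PL.
Variables (R : realType) (Y : normedModType R) (ip : Y -> Y -> R).
Hypothesis hip : inner_product ip.
Variables (H : set Y) (P : Y -> Y).
Hypothesis hH : closed_subspace H.
Hypothesis hP : orth_proj ip H P.

Lemma HP y : H (P y). Proof. by case: hP. Qed.
Lemma Porth y h : H h -> ip (y - P y) h = 0. Proof. by case: hP => _; apply. Qed.

Lemma H0 : H 0. Proof. by case: hH => -[]. Qed.
Lemma HZD a x y : H x -> H y -> H (a *: x + y).
Proof. by case: hH => -[_ h] _; apply: h. Qed.
Lemma HD x y : H x -> H y -> H (x + y).
Proof. by move=> gx gy; rewrite -[x]scale1r; apply: HZD. Qed.
Lemma HZ a x : H x -> H (a *: x).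
Proof. by move=> gx; rewrite -[_ *: _]addr0; apply: HZD => //; apply: H0. Qed.
Lemma HB x y : H x -> H y -> H (x - y).
Proof. by move=> gx gy; apply: HD => //; rewrite -scaleN1r; apply: HZ. Qed.

Lemma P_id h : H h -> P h = h.
Proof.
move=> Hh; apply/eqP; rewrite eq_sym -subr_eq0; apply/eqP; apply: (ip_eq0 hip).
by apply: Porth; apply: HB => //; apply: HP.
Qed.

Lemma ip_P y h : H h -> ip (P y) h = ip y h.
Proof.
move=> Hh; have := Porth y Hh; rewrite (ipBl hip) => /eqP.
by rewrite subr_eq0 => /eqP.
Qed.

Lemma P_lin a x y : P (a *: x + y) = a *: P x + P y.
Proof.
set d := P (a *: x + y) - (a *: P x + P y).
have Hd : H d by apply: HB; [apply: HP | apply: HZD; apply: HP].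
apply/eqP; rewrite -subr_eq0; apply/eqP; apply: (ip_eq0 hip).
have -> : ip d d = ip (P (a *: x + y)) d - ip (a *: P x + P y) d.
  by rewrite {1}/d (ipBl hip).
by rewrite (ip_lin hip) !ip_P // (ip_lin hip) subrr.
Qed.

Lemma P_norm y : `|P y| <= `|y|.
Proof.
have e : y = P y + (y - P y) by rewrite addrC subrK.
have := normD2 hip (P y) (y - P y); rewrite -e (ip_sym hip) (Porth _ (HP y)) => h.
rewrite -ler_sqr ?nnegrE // h; have := sqr_ge0 `|y - P y|; lra.
Qed.

End PL.

Section LP.
Variables (R : realType) (X : normedModType R) (p T : R).
Hypothesis hT : 0 < T.
Hypothesis hp : 1 < p.

Lemma Iset_meas : measurable (Iset T).
Proof. exact: measurable_itv. Qed.

Lemma Iset_measure : (@lebesgue_measure R) (Iset T) = T%:E.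
Proof. by rewrite /Iset lebesgue_measure_itv /= lte_fin hT /= oppr0 adde0. Qed.

Lemma cst_int (c : X) : (\int[@lebesgue_measure R]_(t in Iset T) ((`|c| `^ p)%:E) =
  ((`|c| `^ p) * T)%:E)%E.
Proof.
rewrite integral_cst ?Iset_meas //.
transitivity ((`|c| `^ p)%:E * T%:E)%E; first by congr (_ * _)%E; exact: Iset_measure.
by []. exact: measurable_itv.
Qed.

Lemma cst_Lp (c : X) : Lp_fun p T (fun _ => c).
Proof.
split; last by rewrite cst_int ltry.
exists (fun _ _ => c); split.
  move=> k; exists 1%N, (fun _ => setT), (fun _ => c); split => // t.
  by rewrite big_ord1 indicT /= scale1r.
by apply: aeW => t _; exact: cvg_cst.
Qed.

Lemma cst_norm (c : X) : Lp_norm p T (fun _ => c) = `|c| * T `^ p^-1.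
Proof.
rewrite /Lp_norm cst_int /= powRM ?powR_ge0 ?ltW // -powRrM mulfV ?powRr1 //.
by rewrite gt_eqF // (lt_trans _ hp).
Qed.

Lemma cst_dual (phi : (R -> X) -> R) : Lp_dual_elt p T phi ->
  dual_set (fun x : X => phi (fun _ => x)).
Proof.
case=> hlin [C hC]; split.
  by move=> a x y _ _; rewrite -hlin //; apply: cst_Lp.
exists (C * T `^ p^-1) => x _.
apply: le_trans (hC _ (cst_Lp x)) _.
by rewrite cst_norm [`|x| * _]mulrC mulrA.
Qed.


Lemma part_i (V : set X) (Vn : nat -> set X)
  (QNC2 : forall (m : nat -> nat) (x : nat -> R -> X) (x0 : R -> X),
      tends_to_infty m ->
      (forall n, Lp_fun_in p T (Vn (m n)) (x n)) ->
      Lp_weak_cvg p T x x0 ->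
      Lp_fun_in p T V x0)
  m vn v : tends_to_infty m -> (forall n, Vn (m n) (vn n)) -> weak_cvg vn v -> V v.
Proof.
move=> hm hvn [_ hw].
have := QNC2 m (fun n _ => vn n) (fun _ => v) hm.
case.
- move=> n; split; [exact: cst_Lp | apply: aeW => t _; exact: hvn].
- split; first exact: cst_Lp.
  split; first by move=> n; exact: cst_Lp.
  move=> phi hphi; exact: (hw _ (cst_dual hphi)).
move=> _ hae; apply: contrapT => nV.
case: hae => N [mN N0 sub].
have hIN : Iset T `<=` N by move=> t It; apply: sub => /= /(_ It).
have h0 : (@lebesgue_measure R) (Iset T) = 0%E.
  apply/negligibleP; first exact: measurable_itv.
  by exists N; split.
rewrite Iset_measure in h0; case: h0 => h0.
by move: hT; rewrite h0 ltxx.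
Qed.

End LP.

Lemma aux_Cx (R : realType) (C x eps : R) : 0 <= C -> 0 <= x -> x * (C + 1) < eps -> C * x <= eps.
Proof. move=> C0 x0 h; nra. Qed.

Lemma aux_sum3 (R : realType) (a b c eps : R) : a < eps -> b <= eps -> c <= eps -> a + b + c < 3 * eps.
Proof. lra. Qed.

Lemma aux_3 (R : realType) (u e : R) : u < e / 3 -> 3 * u < e.
Proof. lra. Qed.

Theorem mainTheorem4
  (R : realType)
  (X : completeNormedModType R) (Y : completeNormedModType R)
  (ip : Y -> Y -> R) (V : set X) (H : set Y) (j : X -> Y) (P : Y -> Y)
  (p T : R) (Vn : nat -> set X)
  (hXrefl : reflexive_space X)
  (hip : inner_product ip)
  (hj : bounded_linear_inj j)
  (hjdense : closure (range j) = setT)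
  (hV : closed_subspace V)
  (hH : closed_subspace H)
  (hjVH : j @` V `<=` H)
  (hjVdense : H `<=` closure (j @` V))
  (hP : orth_proj ip H P)
  (hT : 0 < T) (hp : 1 < p)
  (hQNC : quasi_nonconforming p T V Vn) :
  (forall (m : nat -> nat) (vn : nat -> X) (v : X),
      tends_to_infty m -> (forall n, Vn (m n) (vn n)) ->
      weak_cvg vn v -> V v) /\
  (forall (m : nat -> nat) (vn : nat -> X) (v : X),
      tends_to_infty m -> (forall n, Vn (m n) (vn n)) ->
      (exists M : R, forall n, `|vn n| <= M) -> V v ->
      (weak_cvg vn v <-> weak_cvg_in H (fun n => P (j (vn n))) (j v))) /\
  (forall h : Y, H h ->
      exists (m : nat -> nat) (vn : nat -> X),
        tends_to_infty m /\ (forall n, Vn (m n) (vn n)) /\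
        (fun n => j (vn n)) @ \oo --> h).
Proof.
have [hVn [hQ1 hQ2]] := hQNC.
have pi := part_i hT hp hQ2.
have [Cj [Cj0 hCj]] := j_bnd hj.
have jB x y : j (x - y) = j x - j y.
  by rewrite -[x - y]addrC -scaleN1r (j_lin hj) scaleN1r addrC.
split; first exact: pi.
split.
  move=> m vn v hm hvn [M hM] Vv.
  have Hjv : H (j v) by apply: hjVH; exists v.
  split.
    move=> hw; split => // f [flin [C hC]].
    have hg : dual_set (fun x => f (P (j x))).
      split.
        move=> a x y _ _; rewrite (j_lin hj) (P_lin hip hH hP) flin //; [exact: (HP hP (j x)) | exact: (HP hP (j y))].
      exists (`|C| * Cj) => x _.
      apply: le_trans (hC _ (HP hP _)) _.
      apply: le_trans (ler_wpM2r (normr_ge0 _) (ler_norm C)) _.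
      rewrite -mulrA; apply: ler_wpM2l => //.
      exact: le_trans (P_norm hip hP _) (hCj _).
    by have := hw.2 _ hg; rewrite /= (P_id hip hH hP Hjv).
  move=> [_ hb]; split => // f hf.
  apply/cvgrPdist_lt => e e0; apply: contrapT => /freq_sub [tau [tinc htau]].
  have hyB : forall n, `|j (vn (tau n))| <= Cj * M.
    by move=> n; apply: le_trans (hCj _) _; apply: ler_wpM2l.
  have [s [sinc hs]] := HS hip hyB.
  have hxB : forall n, `|vn (tau (s n))| <= M by move=> n; exact: hM.
  have [w hw] := KL hXrefl hip hj hxB hs.
  have ts := incr_comp tinc sinc.
  have Vw : V w := pi _ _ _ (tends_sub ts hm) (fun n => hvn _) hw.
  have key : forall h, H h -> ip (P (j w)) h = ip (j v) h.
    move=> h Hh.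
    have g_dual : dual_set (fun x => ip (P (j x)) h).
      split.
        by move=> a x y _ _; rewrite (j_lin hj) (P_lin hip hH hP) (ip_lin hip).
      exists (Cj * `|h|) => x _.
      apply: le_trans (cauchy_schwarz hip _ _) _.
      rewrite mulrAC; apply: ler_wpM2r => //.
      exact: le_trans (P_norm hip hP _) (hCj _).
    have c1 := hw.2 _ g_dual.
    have k_dual : dual_elt_on H (fun z => ip z h).
      split; first by move=> a x y _ _; rewrite (ip_lin hip).
      by exists `|h| => z _; rewrite mulrC; exact: cauchy_schwarz hip _ _.
    have c2 := hb _ k_dual.
    exact: lim_uniq c1 (cvg_sub ts c2).
  have Hd : H (P (j w) - j v) by apply: (HB hH); [exact: (HP hP (j w)) | exact: Hjv].
  have ePw : P (j w) = j v.
    apply/eqP; rewrite -subr_eq0; apply/eqP; apply: (ip_eq0 hip).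
    by rewrite (ipBl hip) (key _ Hd) subrr.
  have Hjw : H (j w) by apply: hjVH; exists w.
  have ew : w = v.
    by case: hj => _ [hinj _]; apply: hinj; rewrite -(P_id hip hH hP Hjw) ePw.
  have := hw.2 _ hf; rewrite ew => /cvgrPdist_lt /(_ e e0) [N _ HN].
  by apply: (htau (s N)); exact: HN N (leqnn N).
move=> h Hh.
have [D [DV [VD Dapp]]] := hQ1.
have step : forall k : nat, exists q : nat * X,
    [/\ (k <= q.1)%N, Vn q.1 q.2 & `|h - j q.2| < 3 * k.+1%:R^-1].
  move=> k; set eps := k.+1%:R^-1.
  have eps0 : 0 < eps by rewrite invr_gt0 ltr0n.
  have [y [[v Vv <-] hb]] := hjVdense h Hh _ (nbhsx_ballx h eps eps0).
  rewrite -ball_normE /= in hb.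
  have eps'0 : 0 < eps / (Cj + 1) by rewrite divr_gt0 //; lra.
  have [d [Dd hd]] := VD v Vv _ (nbhsx_ballx v _ eps'0).
  rewrite -ball_normE /= in hd.
  have [w [hw1 hw2]] := Dapp d Dd.
  have [N _ HN] : \forall n \near \oo, `|d - w n| < eps / (Cj + 1).
    by move/cvgrPdist_lt : hw2 => /(_ _ eps'0).
  exists (maxn k N, w (maxn k N)); split => //=; first exact: leq_maxl.
  have hN := HN _ (leq_maxr k N).
  have -> : h - j (w (maxn k N)) = (h - j v) + j (v - d) + j (d - w (maxn k N)).
    by rewrite !jB !addrA subrK subrK.
  apply: le_lt_trans (ler_normD _ _) _.
  apply: le_lt_trans (lerD (ler_normD _ _) (lexx _)) _.
  apply: aux_sum3 => //.
    apply: le_trans (hCj _) _; apply: aux_Cx => //.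
    by rewrite -ltr_pdivlMr //; lra.
  apply: le_trans (hCj _) _; apply: aux_Cx => //.
  by rewrite -ltr_pdivlMr //; lra.
have [q hq] := choice step.
exists (fun k => (q k).1), (fun k => (q k).2); split.
  by move=> N; exists N => n hn; case: (hq n) => h1 _ _; exact: leq_trans hn h1.
split; first by move=> n; case: (hq n).
apply/cvgrPdist_lt => e e0.
have e3 : 0 < e / 3 by rewrite divr_gt0.
have [K HK] := natSinv_small e3.
exists K => // n /= hn.
case: (hq n) => _ _ h3; apply: lt_trans h3 _.
exact: aux_3 (HK n hn).
Qed.
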